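(* Let $\epsilon>0$ be a constant and let $\alpha\in(1/2,1)$ be a constant. Let $\mathbf C,\mathbf B$ be independent, uniformly random $m\times n$ matrices over $\mathbb{Z}_2$ with $\alpha n\le m\le n$. Then for sufficiently large $n$ there exists a constant $\delta>0$ such that $\Pr[\operatorname{rank}(\mathbf C^\intercal\mathbf B+\mathbf B^\intercal\mathbf C)\le(1-\epsilon)n]\le2^{-\delta n^2}$. *)

(* Defs.v *)
From mathcomp Require Import all_boot all_algebra.
From Stdlib Require Import Reals.

Set Implicit Arguments.
Unset Strict Implicit.
Unset Printing Implicit Defensive.

Local Open Scope ring_scope.

Definition symform (m n : nat) (C B : 'M['F_2]_(m, n)) : 'M['F_2]_n :=
  C^T *m B + B^T *m C.

Definition low_rank (m n : nat) (eps : R) (C B : 'M['F_2]_(m, n)) : bool :=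
  if Rle_dec (INR (\rank (symform C B))) ((1 - eps) * INR n)%R
  then true else false.

Definition bad_count (m n : nat) (eps : R) : nat :=
  #|[set CB : 'M['F_2]_(m, n) * 'M['F_2]_(m, n) | low_rank eps CB.1 CB.2]|.

(* Probability of the event for C, B independent uniformly random
   m x n matrices over F_2 (the sample space has 2^(2mn) equally likely
   points). *)
Definition prob_low_rank (m n : nat) (eps : R) : R :=
  (INR (bad_count m n eps) / (2 ^ (2 * m * n)))%R.

(* Main.v *)
Require Import Defs.
From mathcomp Require Import all_boot all_algebra.
From Stdlib Require Import Reals.
From mathcomp Require Import zify.

Module Comb.
Import all_boot all_algebra.
Set Implicit Arguments. Unset Strict Implicit. Unset Printing Implicit Defensive.
Import GRing.Theory.
Local Open Scope ring_scope.

Notation F := 'F_2.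

Lemma cardF : #|F| = 2%N.
Proof. by rewrite card_Fp. Qed.

Lemma card_col q p (P : pred 'M[F]_(1 + q, p)) :
  #|[set A | P A]| = (\sum_(A0 : 'M_(q,p)) #|[set v : 'M_(1,p) | P (col_mx v A0)]|)%N.
Proof.
rewrite -sum1_card.
rewrite (eq_bigl (fun A => P A)); last by move=> A; rewrite inE.
rewrite (reindex (fun x : 'M[F]_(q,p) * 'M[F]_(1,p) => col_mx x.2 x.1)) /=; last first.
  exists (fun A => (dsubmx A, usubmx A)) => [x _|A _] /=.
    by rewrite col_mxKd col_mxKu; case: x.
  by rewrite vsubmxK.
rewrite -(pair_big_dep xpredT (fun A0 v => P (col_mx v A0)) (fun _ _ => 1%N)) /=.
apply: eq_bigr => A0 _; rewrite -sum1_card; apply: eq_bigl => v; by rewrite inE.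
Qed.

Lemma card_subsp p r (X : 'M[F]_(r, p)) :
  (#|[set v : 'rV_p | (v <= X)%MS]| <= 2 ^ \rank X)%N.
Proof.
set S := [set v : 'rV_p | _].
have inj : {in S &, injective (fun v => v *m pinvmx (row_base X))}.
  move=> v w; rewrite !inE => vX wX e.
  rewrite -(mulmxKpV (_ : (v <= row_base X)%MS)); last by rewrite eq_row_base.
  rewrite -(mulmxKpV (_ : (w <= row_base X)%MS)); last by rewrite eq_row_base.
  by rewrite e.
rewrite -(card_in_imset inj).
apply: leq_trans (max_card _) _.
by rewrite card_mx cardF mul1n.
Qed.

Lemma card_ker p q (B : 'M[F]_(p, q)) :
  (#|[set v : 'rV_p | v *m B == 0%R]| <= 2 ^ (p - \rank B))%N.
Proof.
rewrite -mxrank_ker; apply: leq_trans (card_subsp (kermx B)).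
apply: subset_leq_card; apply/subsetP => v; rewrite !inE.
by move/eqP/sub_kermxP.
Qed.


Section RankCol.
Variables (p q : nat) (v : 'M[F]_(1, p)) (A0 : 'M[F]_(q, p)).

Lemma rank_col : \rank (col_mx v A0) = \rank (v + A0)%MS.
Proof. by apply/eqmx_rank/eqmxP; apply: eqmx_sym; apply: addsmxE. Qed.

Lemma rank_col_ge : (\rank A0 <= \rank (col_mx v A0))%N.
Proof. by rewrite rank_col mxrankS // addsmxSr. Qed.

Lemma rank_col_le : (\rank (col_mx v A0) <= (\rank A0).+1)%N.
Proof.
rewrite rank_col; apply: leq_trans (mxrank_adds_leqif v A0).1 _.
exact: (leq_add (rank_leq_row v) (leqnn _)).
Qed.

Lemma rank_col_eq : (\rank (col_mx v A0) == \rank A0) = (v <= A0)%MS.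
Proof.
rewrite rank_col eq_sym.
have := mxrank_leqif_sup (addsmxSr v A0); case => _ ->.
by rewrite addsmx_sub submx_refl andbT.
Qed.

End RankCol.

Definition Dset (j p d : nat) := [set A : 'M[F]_(j, p) | (\rank A + d <= j)%N].

Lemma D_bound n p : (n <= p)%N -> forall j d, (j <= n)%N ->
  (#|Dset j p d| * 2 ^ (d * (p - n)) <= 2 ^ (p * j + j))%N.
Proof.
move=> np; elim=> [|j IH] d jn.
  case: d => [|d].
    rewrite muln0 mul0n addn0 expn0 muln1.
    by apply: leq_trans (max_card _) _; rewrite card_mx cardF.
  have -> : Dset 0 p d.+1 = set0.
    by apply/setP => A; rewrite !inE addnS ltn0.
  by rewrite cards0.
have jn' : (j <= n)%N by apply: ltnW.
rewrite /Dset (card_col (fun A : 'M[F]_(1 + j, p) => \rank A + d <= 1 + j)%N).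
have step : forall A0 : 'M[F]_(j, p),
  (#|[set v : 'M[F]_(1, p) | (\rank (col_mx v A0) + d <= 1 + j)%N]| <=
    2 ^ p * (A0 \in Dset j p d) + 2 ^ j * (A0 \in Dset j p d.-1))%N.
  move=> A0; rewrite !inE.
  case: (leqP (\rank A0 + d) j) => h1.
    by apply: leq_trans (max_card _) _; rewrite card_mx cardF mul1n muln1 leq_addr.
  rewrite muln0 add0n.
  case: d h1 => [|d] h1.
    by have := rank_leq_row A0; lia.
  rewrite /= .
  case: (leqP (\rank A0 + d) j) => h2; last first.
    rewrite muln0 leqn0 cards_eq0; apply/eqP/setP => v; rewrite !inE.
    apply/negbTE; rewrite -ltnNge addnS ltnS.
    by apply: leq_trans h2 _; rewrite leq_add2r rank_col_ge.
  rewrite muln1.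
  apply: leq_trans (_ : #|[set v : 'rV_p | (v <= A0)%MS]| <= _)%N.
    apply: subset_leq_card; apply/subsetP => v; rewrite !inE => hv.
    rewrite -rank_col_eq eqn_leq rank_col_ge andbT.
    lia.
  by apply: leq_trans (card_subsp _) _; rewrite leq_exp2l // rank_leq_row.
have sumS : forall S : {set 'M[F]_(j, p)}, (\sum_A0 (A0 \in S : nat) = #|S|)%N.
  move=> S; rewrite -sum1_card [RHS]big_mkcond /=; apply: eq_bigr => A0 _.
  by case: (A0 \in S).
have H : (\sum_(A0 : 'M[F]_(j,p)) #|[set v : 'M[F]_(1, p) | (\rank (col_mx v A0) + d <= 1 + j)%N]| <=
   \sum_(A0 : 'M[F]_(j,p)) (2 ^ p * (A0 \in Dset j p d) + 2 ^ j * (A0 \in Dset j p d.-1)))%N.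
  by apply: leq_sum => A0 _; apply: step.
apply: leq_trans (leq_mul H (leqnn _)) _.
rewrite big_split /= -!big_distrr /= !sumS.
have key : (2 ^ j * 2 ^ (d * (p - n)) <= 2 ^ p * 2 ^ (d.-1 * (p - n)))%N.
  case: d {step H} => [|d] /=.
    by rewrite !mul0n !muln1 leq_exp2l //; lia.
  rewrite mulSn expnD mulnA -expnD leq_mul2r leq_exp2l //; last by lia.
have IH1 := IH d jn'; have IH2 := IH d.-1 jn'.
set X := #|Dset j p d| in IH1 *; set Y := #|Dset j p d.-1| in IH2 *.
have -> : (2 ^ (p * j.+1 + j.+1) = 2 ^ p * 2 ^ (p * j + j) + 2 ^ p * 2 ^ (p * j + j))%N.
  by rewrite -expnD addnn -mul2n -expnS; congr (2 ^ _)%N; lia.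
have -> : ((2 ^ p * X + 2 ^ j * Y) * 2 ^ (d * (p - n)) =
    2 ^ p * (X * 2 ^ (d * (p - n))) + (2 ^ j * 2 ^ (d * (p - n))) * Y)%N.
  by rewrite mulnDl -!mulnA [(Y * _)%N]mulnC.
apply: leq_add; first by rewrite leq_mul2l IH1 orbT.
apply: leq_trans (leq_mul key (leqnn _)) _.
by rewrite -mulnA leq_mul2l mulnC IH2 orbT.
Qed.


Section Qcount.
Variables (p : nat) (J : 'M[F]_p).
Hypothesis Ju : J \in unitmx.

Definition good q c (A : 'M[F]_(q, p)) :=
  [forall i : 'I_q, forall l : 'I_q, (i < c)%N ==> ((A *m J *m A^T) i l == 0%R)].

Lemma bigE q (v : 'M[F]_(1, p)) (A0 : 'M[F]_(q, p)) :
  col_mx v A0 *m J *m (col_mx v A0)^T =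
  block_mx (v *m J *m v^T) (v *m J *m A0^T) (A0 *m J *m v^T) (A0 *m J *m A0^T).
Proof. by rewrite tr_col_mx mul_col_mx mul_col_row. Qed.

Lemma good_split q c (v : 'M[F]_(1, p)) (A0 : 'M[F]_(q, p)) :
  good c.+1 (col_mx v A0 : 'M_(1 + q, p)) -> good c A0 /\ (v *m (J *m A0^T) == 0%R).
Proof.
move=> /forallP g; split.
  apply/forallP => i; apply/forallP => l; apply/implyP => ic.
  have := g (rshift 1 i); move/forallP/(_ (rshift 1 l))/implyP; rewrite /= add1n ltnS.
  by move/(_ ic); rewrite bigE block_mxEdr.
apply/eqP; rewrite mulmxA; apply/matrixP => a l; rewrite ord1 [RHS]mxE.
have := g (lshift q 0); move/forallP/(_ (rshift 1 l))/implyP => /=.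
by move/(_ isT); rewrite bigE block_mxEur => /eqP ->.
Qed.

Lemma rank_JA q (A0 : 'M[F]_(q, p)) : \rank (J *m A0^T) = \rank A0.
Proof.
rewrite -mxrank_tr trmx_mul trmxK mxrankMfree ?mxrank_tr //.
by rewrite row_free_unit unitmx_tr.
Qed.

Definition Qset r h c := [set A : 'M[F]_(c + r, p) | good c A && (c + r <= \rank A + h)%N].

Fixpoint G r h c := if c is c'.+1 then (G r h c' + (c' + r - h))%N else 0%N.

Lemma Q_bound r h c : (#|Qset r h c| * 2 ^ G r h c <= 2 ^ (p * (c + r)))%N.
Proof.
elim: c => [|c IH].
  rewrite /= muln1; apply: leq_trans (max_card _) _.
  by rewrite card_mx cardF mulnC.
rewrite /Qset (card_col (fun A : 'M[F]_(1 + (c + r), p) =>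
   good c.+1 A && (c.+1 + r <= \rank A + h)%N)).
have step : forall A0 : 'M[F]_(c + r, p),
  (#|[set v : 'M[F]_(1, p) | good c.+1 (col_mx v A0 : 'M_(1 + (c + r), p))
       && (c.+1 + r <= \rank (col_mx v A0) + h)%N]| * 2 ^ (c + r - h) <=
    2 ^ p * (A0 \in Qset r h c))%N.
  move=> A0.
  case: (boolP (A0 \in Qset r h c)) => hA0; last first.
    rewrite muln0 leqn0 muln_eq0 cards_eq0; apply/orP; left.
    apply/eqP/setP => v; rewrite !inE; apply/negbTE/negP => /andP[g1 r1].
    move: hA0; rewrite inE; case/good_split: g1 => -> _ /=.
    have := rank_col_le v A0; lia.
  have hr : (c + r <= \rank A0 + h)%N by move: hA0; rewrite inE => /andP[].
  apply: (@leq_trans (2 ^ (p - \rank A0) * 2 ^ (c + r - h))).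
    rewrite leq_mul2r; apply/orP; right.
    apply: leq_trans (_ : #|[set v : 'rV_p | v *m (J *m A0^T) == 0%R]| <= _)%N.
      apply: subset_leq_card; apply/subsetP => v; rewrite !inE => /andP[g1 _].
      by case/good_split: g1.
    by apply: leq_trans (card_ker _) _; rewrite rank_JA.
  rewrite muln1 -expnD leq_exp2l //.
  have := rank_leq_col A0; lia.
have sumS : forall S : {set 'M[F]_(c + r, p)}, (\sum_A0 (A0 \in S : nat) = #|S|)%N.
  move=> S; rewrite -sum1_card [RHS]big_mkcond /=; apply: eq_bigr => A0 _.
  by case: (A0 \in S).
have H : ((\sum_(A0 : 'M[F]_(c + r, p)) #|[set v : 'M[F]_(1, p) | good c.+1 (col_mx v A0 : 'M_(1 + (c + r), p))
       && (c.+1 + r <= \rank (col_mx v A0) + h)%N]|) * 2 ^ (c + r - h) <=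
    2 ^ p * #|Qset r h c|)%N.
  rewrite big_distrl /= -sumS big_distrr /=.
  by apply: leq_sum => A0 _; apply: step.
rewrite /= expnD mulnA.
rewrite mulnAC.
apply: leq_trans (leq_mul H (leqnn _)) _.
rewrite -mulnA.
have -> : (p * (c.+1 + r) = p + p * (c + r))%N by rewrite mulnC mulSn mulnC.
by rewrite expnD leq_mul2l IH orbT.
Qed.

End Qcount.


Lemma prod_lb k : (2 ^ 'C(k, 2) <= \prod_(1 <= i < k.+1) (2 ^ i - 1))%N.
Proof.
elim: k => [|k IH]; first by rewrite big_geq.
rewrite big_nat_recr //= binS bin1 expnD leq_mul //.
by rewrite expnS; have := expn_gt0 2 k; lia.
Qed.

Lemma GL_lb k : (2 ^ (k * k.-1) <= #|[set W : 'M[F]_k | W \in unitmx]|)%N.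
Proof.
case: k => [|k].
  by rewrite expn0 card_gt0; apply/set0Pn; exists 1%:M; rewrite inE unitmx1.
have -> : #|[set W : 'M[F]_k.+1 | W \in unitmx]| = #|'GL_k.+1[F]%g|.
  by rewrite cardsT /= card_sub; apply: eq_card => A; rewrite !inE.
rewrite card_GL // cardF.
have -> : (k.+1 * k.+1.-1 = 'C(k.+1, 2) + 'C(k.+1, 2))%N.
  by rewrite /= -{2}(bin1 k) (mul_bin_diag k.+1 1) addnn mul2n.
by rewrite expnD leq_mul2l prod_lb orbT.
Qed.


Lemma sum_ind (T : finType) (P : pred T) : (\sum_(x : T) (P x : nat) = #|[set x | P x]|)%N.
Proof.
rewrite -sum1_card [RHS]big_mkcond /=; apply: eq_bigr => x _.
by rewrite inE; case: (P x).
Qed.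

Section Main2.
Variables (p n k h : nat) (J : 'M[F]_p).
Hypothesis Ju : J \in unitmx.
Hypothesis kn : (k <= n)%N.

Definition MR (R : 'M[F]_(n, p)) := R *m J *m R^T.

Definition Bad2 := [set R : 'M[F]_(n, p) | (\rank (MR R) + k <= n)%N && (n <= \rank R + h)%N].

Lemma X_lb R : (\rank (MR R) + k <= n)%N ->
  (2 ^ (k * k.-1) <= #|[set X : 'M[F]_(k, n) | row_free X && (X *m MR R == 0%R)]|)%N.
Proof.
move=> hR.
set K := kermx (MR R).
have rK : (k <= \rank K)%N by rewrite mxrank_ker; lia.
set B : 'M[F]_(k, n) := pid_mx k *m row_base K.
have Bfree : row_free B.
  by rewrite /row_free mxrankMfree ?row_base_free // rank_pid_mx // (eq_row_base K).
have BM : B *m MR R = 0%R.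
  rewrite /B -mulmxA (_ : row_base K *m MR R = 0%R) ?mulmx0 //.
  by apply/sub_kermxP; rewrite (eq_row_base K).
apply: leq_trans (GL_lb k) _.
have inj : {in [set W : 'M[F]_k | W \in unitmx] &, injective (fun W => W *m B)}.
  by move=> W1 W2 _ _; apply: row_free_inj.
rewrite -(card_in_imset inj); apply: subset_leq_card; apply/subsetP => X.
case/imsetP => W; rewrite inE => Wu ->; rewrite inE.
rewrite /row_free mxrankMfree // mxrank_unit // eqxx /=.
by rewrite -mulmxA BM mulmx0.
Qed.

Lemma perX (X : 'M[F]_(k, n)) : row_free X ->
  (#|[set R | (R \in Bad2) && (X *m MR R == 0%R)]| * 2 ^ (G (n - k) h k) <= 2 ^ (p * n))%N.
Proof.
move=> Xf.
set r := \rank (X^C)%MS.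
have rr : (k + r = n)%N.
  rewrite /r mxrank_compl (eqP Xf); lia.
set P : 'M[F]_(k + r, n) := col_mx X (row_base (X^C)%MS).
have Pfull : row_full P.
  rewrite /row_full /P.
  have -> : \rank (col_mx X (row_base (X^C)%MS)) = \rank (X + X^C)%MS.
    apply/eqmx_rank/eqmxP; apply: eqmx_trans (eqmx_sym (addsmxE _ _)) _.
    by apply: adds_eqmx => //; apply: eq_row_base.
  exact: addsmx_compl_full.
have [Q QP] := row_fullP Pfull.
have rankPR : forall R : 'M[F]_(n, p), \rank (P *m R) = \rank R.
  move=> R; apply/eqP; rewrite eqn_leq mxrankM_maxr /=.
  by rewrite -{1}(mul1mx R) -QP -mulmxA mxrankM_maxr.
have inj : injective (fun R : 'M[F]_(n, p) => P *m R).
  by move=> R1 R2 e; rewrite -(mul1mx R1) -(mul1mx R2) -QP -!mulmxA e.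
have QB := Q_bound Ju r h k.
have sub : (#|[set R | (R \in Bad2) && (X *m MR R == 0%R)]| <= #|Qset J r h k|)%N.
  rewrite -(card_imset _ inj); apply: subset_leq_card; apply/subsetP => A.
  case/imsetP => R; rewrite !inE => /andP[/andP[_ hR] XM] ->.
  rewrite rankPR (_ : (k + r <= \rank R + h)%N) ?andbT; last by rewrite rr.
  apply/forallP => i; apply/forallP => l; apply/implyP => ik.
  have -> : i = lshift r (Ordinal ik) by apply/val_inj.
  have -> : P *m R *m J *m (P *m R)^T = col_mx (X *m MR R *m P^T) (row_base (X^C)%MS *m MR R *m P^T).
    by rewrite /MR trmx_mul !mulmxA /P !mul_col_mx.
  by rewrite col_mxEu (eqP XM) mul0mx mxE.
have e1 : (n - k = r)%N by lia.
rewrite e1 (_ : (p * n = p * (k + r))%N); last by rewrite rr.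
by apply: leq_trans QB; rewrite leq_mul2r sub orbT.
Qed.

Lemma Bad2_bound :
  (#|Bad2| * 2 ^ (k * k.-1) * 2 ^ (G (n - k) h k) <= 2 ^ (k * n) * 2 ^ (p * n))%N.
Proof.
pose b (R : 'M[F]_(n, p)) (X : 'M[F]_(k, n)) :=
  ((R \in Bad2) && (row_free X && (X *m MR R == 0%R)) : nat).
have in1 : forall R, (\sum_X b R X = (R \in Bad2) * #|[set X : 'M[F]_(k, n) | row_free X && (X *m MR R == 0%R)]|)%N.
  move=> R; rewrite /b; case: (R \in Bad2) => /=; first by rewrite mul1n sum_ind.
  by rewrite mul0n big1.
have in2 : forall X, (\sum_R b R X = row_free X * #|[set R | (R \in Bad2) && (X *m MR R == 0%R)]|)%N.
  move=> X; rewrite /b; case: (row_free X).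
    by rewrite mul1n -sum_ind; apply: eq_bigr => R _.
  by rewrite mul0n big1 // => R _; rewrite andbF.
have L1 : (#|Bad2| * 2 ^ (k * k.-1) <= \sum_R \sum_X b R X)%N.
  have cB : #|Bad2| = (\sum_R (R \in Bad2 : nat))%N.
    by rewrite sum_ind; apply: eq_card => R; rewrite inE.
  rewrite (eq_bigr _ (fun R _ => in1 R)) cB big_distrl /=.
  apply: leq_sum => R _; case hR: (R \in Bad2) => //=.
  rewrite !mul1n; apply: X_lb.
  by move: hR; rewrite inE => /andP[].
rewrite exchange_big /= (eq_bigr _ (fun X _ => in2 X)) in L1.
apply: leq_trans (leq_mul L1 (leqnn _)) _.
rewrite big_distrl /=.
apply: leq_trans (_ : \sum_(X : 'M[F]_(k, n)) 2 ^ (p * n) <= _)%N.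
  apply: leq_sum => X _; case: (boolP (row_free X)) => Xf /=.
    by rewrite mul1n; apply: perX.
  by rewrite !mul0n.
by rewrite sum_nat_const card_mx cardF mulnC.
Qed.

End Main2.


Definition Jm m : 'M[F]_(m + m) := block_mx 0%R 1%:M 1%:M 0%R.

Lemma Jm_unit m : Jm m \in unitmx.
Proof.
have e : Jm m *m Jm m = 1%:M.
  rewrite /Jm mulmx_block !mulmx0 !mul0mx !mulmx1 !addr0 !add0r.
  by rewrite -scalar_mx_block.
by case: (mulmx1_unit e).
Qed.

Lemma symformE m n (C B : 'M[F]_(m, n)) :
  symform C B = row_mx C^T B^T *m Jm m *m (row_mx C^T B^T)^T.
Proof.
rewrite /Jm mul_row_block !mulmx0 !mulmx1 addr0 add0r tr_row_mx !trmxK.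
by rewrite mul_row_col /symform addrC.
Qed.

Lemma G_lb r h c : (2 * (G r h c + c * h) + c >= 2 * c * r + c * c)%N.
Proof.
elim: c => [|c IH]; first by [].
have -> : G r h c.+1 = (G r h c + (c + r - h))%N by [].
have e : (c + r - h + h >= c + r)%N by lia.
move: IH e; set g := G r h c; set x := (c + r - h)%N.
nia.
Qed.

Theorem comb m n k h eps T :
  (n <= m + m)%N -> (k <= n)%N ->
  (forall C B : 'M[F]_(m, n), low_rank eps C B -> (\rank (symform C B) + k <= n)%N) ->
  (4 * T + 6 * k <= k * k)%N -> (4 * h <= k)%N -> (T + n <= h.+1 * (m + m - n))%N ->
  (bad_count m n eps * 2 ^ T <= 2 * 2 ^ ((m + m) * n))%N.
Proof.
move=> np kn hlow hT hh hT2.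
set p := (m + m)%N.
pose f (CB : 'M[F]_(m, n) * 'M[F]_(m, n)) : 'M[F]_(n, p) := row_mx CB.1^T CB.2^T.
have finj : injective f.
  move=> [C1 B1] [C2 B2] /eq_row_mx /= [e1 e2].
  by rewrite (trmx_inj e1) (trmx_inj e2).
have s1 : (bad_count m n eps <= #|Dset n p h.+1| + #|Bad2 n k h (Jm m)|)%N.
  rewrite /bad_count -(card_imset _ finj).
  apply: leq_trans (_ : #|Dset n p h.+1 :|: Bad2 n k h (Jm m)| <= _)%N; last first.
    by rewrite cardsU leq_subr.
  apply: subset_leq_card; apply/subsetP => R /imsetP [[C B]]; rewrite inE /= => lr ->.
  have hr := hlow C B lr.
  rewrite symformE in hr.
  rewrite !inE /MR hr /=.
  case: (leqP n (\rank (f (C, B)) + h)) => h1; first by rewrite orbT.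
  by rewrite orbF addnS.
have D1 := D_bound np h.+1 (leqnn n).
have B2 := Bad2_bound h (Jm_unit m) kn.
have GL := G_lb (n - k) h k.
have eD : (#|Dset n p h.+1| * 2 ^ T <= 2 ^ (p * n))%N.
  rewrite -(leq_pmul2r (expn_gt0 2 n)) -mulnA -expnD -expnD.
  apply: leq_trans D1; rewrite leq_mul2l leq_exp2l //; lia.
have eB : (#|Bad2 n k h (Jm m)| * 2 ^ T <= 2 ^ (p * n))%N.
  rewrite -(leq_pmul2l (expn_gt0 2 (k * n))) mulnCA.
  apply: (leq_trans _ B2); rewrite -mulnA -!expnD leq_mul2l leq_exp2l //; apply/orP; right.
  have a1 : (4 * (k * h) <= k * k)%N by rewrite mulnCA leq_mul2l hh orbT.
  have a2 : (k * k.-1 + k = k * k)%N.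
    case: (posnP k) => [->|kp] //.
    by rewrite -[X in (_ + X)%N]muln1 -mulnDr addn1 prednK.
  have a3 : (k * (n - k) + k * k = k * n)%N by rewrite -mulnDr subnK.
  move: GL; set g := G (n - k) h k; set x := (k * (n - k))%N.
  rewrite (mulnC 2 k) -mulnA -/x.
  lia.
rewrite mul2n -addnn.
apply: leq_trans (leq_mul s1 (leqnn _)) _.
by rewrite mulnDl leq_add.
Qed.


Lemma comb2 m n K eps :
  (n <= m + m)%N ->
  (forall C B : 'M[F]_(m, n), low_rank eps C B -> (\rank (symform C B) + n %/ K <= n)%N) ->
  (6 <= n %/ K)%N -> (n <= (n %/ K %/ 4).+1 * (m + m - n))%N ->
  (bad_count m n eps * 2 ^ (minn (((n %/ K) * (n %/ K) - 6 * (n %/ K)) %/ 4)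
        ((n %/ K %/ 4).+1 * (m + m - n) - n)) <= 2 * 2 ^ ((m + m) * n))%N.
Proof.
move=> np hlow k6 hB.
set k := (n %/ K)%N in hlow k6 hB *.
set h := (k %/ 4)%N in hB *.
apply: (@comb m n k h eps) => //.
- by rewrite /k leq_div.
- have a1 := leq_trunc_div (k * k - 6 * k) 4.
  have a2 := geq_minl ((k * k - 6 * k) %/ 4) (h.+1 * (m + m - n) - n).
  have a3 : (6 * k <= k * k)%N by rewrite leq_mul2r k6 orbT.
  lia.
- have := leq_trunc_div k 4; rewrite -/h; lia.
- have a2 := geq_minr ((k * k - 6 * k) %/ 4) (h.+1 * (m + m - n) - n).
  lia.
Qed.

Lemma nat_facts n K : (0 < K)%N ->
  [/\ (n %/ K * K <= n)%N, (n < (n %/ K).+1 * K)%N,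
      (n %/ K < (n %/ K %/ 4).+1 * 4)%N &
      (n %/ K * (n %/ K) - 6 * (n %/ K) <= ((n %/ K * (n %/ K) - 6 * (n %/ K)) %/ 4) * 4 + 3)%N].
Proof.
move=> K0; split; first exact: leq_trunc_div.
- exact: ltn_ceil.
- exact: ltn_ceil.
have := ltn_ceil (n %/ K * (n %/ K) - 6 * (n %/ K)) (isT : (0 < 4)%N).
rewrite mulSn; lia.
Qed.

End Comb.

From Stdlib Require Import Lra Lia Psatz.
Delimit Scope nat_scope with N.
Delimit Scope R_scope with R.
Local Open Scope R_scope.

Lemma realA (K y kr b : R) : 1 <= K -> 9 <= y -> y - 1 <= kr -> 0 < b <= 1 ->
  b / (64 * K * K) * (K * y) ^ 2 + 1 <= (kr * kr - 6 * kr - 3) / 4.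
Proof.
intros HK Hy Hk Hb.
replace (b / (64 * K * K) * (K * y) ^ 2) with (b * y * y / 64) by (field; lra).
assert (H1 : (y - 1) * (y - 1) - 6 * (y - 1) <= kr * kr - 6 * kr).
{ assert (0 <= (kr - (y - 1)) * (kr + (y - 1) - 6)) by (apply Rmult_le_pos; lra). nra. }
assert (H2 : b * y * y <= y * y) by nra.
nra.
Qed.

Lemma realB (K y kr hr b x d : R) : x = K * y -> 1 <= K -> 16 / b <= y -> 9 <= y ->
  y - 1 <= kr -> kr <= 4 * hr + 3 -> b * x <= d -> 0 < b <= 1 ->
  b / (64 * K * K) * x ^ 2 + 1 <= (hr + 1) * d - x.
Proof.
intros Hx HK Hy1 Hy Hk Hh Hd Hb.
subst x.
replace (b / (64 * K * K) * (K * y) ^ 2) with (b * y * y / 64) by (field; lra).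
assert (Hby : 16 <= b * y).
{ apply (Rmult_le_compat_l b) in Hy1; [|lra].
  replace (b * (16 / b)) with 16 in Hy1 by (field; lra). lra. }
assert (Hh1 : y / 4 <= hr + 1) by lra.
assert (H1 : (y / 4) * (b * (K * y)) <= (hr + 1) * d).
{ apply Rmult_le_compat; try lra. nra. }
assert (H2 : b * y * y <= K * (b * y * y)).
{ assert (0 <= b * y * y) by nra. nra. }
assert (H3 : 16 * (K * y) <= (K * y) * (b * y)).
{ rewrite (Rmult_comm 16). apply Rmult_le_compat_l; nra. }
assert (H4 : 9 <= K * y) by nra.
nra.
Qed.

Lemma INR_addn a b : INR (addn a b) = INR a + INR b.
Proof. exact (plus_INR a b). Qed.
Lemma INR_muln a b : INR (muln a b) = INR a * INR b.
Proof. exact (mult_INR a b). Qed.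
Lemma INR_subn a b : leq b a -> INR (subn a b) = INR a - INR b.
Proof. move=> /leP h; exact (minus_INR a b h). Qed.
Lemma INR_expn a b : INR (expn a b) = INR a ^ b.
Proof.
elim: b => [|b IH]; first by rewrite expn0.
by rewrite expnS INR_muln IH.
Qed.
Lemma INR_leq a b : leq a b -> INR a <= INR b.
Proof. by move=> /leP; apply: le_INR. Qed.
Lemma INR_leq' a b : INR a <= INR b -> leq a b.
Proof. by move=> h; apply/leP; apply: INR_le. Qed.
Lemma INR_ltn a b : leq (S a) b -> INR a < INR b.
Proof. by move=> /ltP; apply: lt_INR. Qed.

Lemma hlow_lemma m n k eps : INR k <= eps * INR n ->
  forall C B : 'M['F_2]_(m, n), low_rank eps C B -> (\rank (symform C B) + k <= n)%N.
Proof.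
move=> hk C B; rewrite /low_rank; case: Rle_dec => // H _.
apply/leP; apply: INR_le; rewrite (plus_INR _ k); lra.
Qed.

Arguments INR_leq {a b}.
Arguments INR_leq' {a b}.
Arguments INR_ltn {a b}.
Arguments INR_subn {a b}.


Theorem lemmaD7 (eps alpha : R) :
  (0 < eps)%R -> (1 / 2 < alpha)%R -> (alpha < 1)%R ->
  exists delta : R, (0 < delta)%R /\
  exists N : nat, forall n m : nat, (N <= n)%N ->
    (alpha * INR n <= INR m)%R -> (m <= n)%N ->
    (prob_low_rank m n eps <= Rpower 2 (- delta * INR n ^ 2))%R.
Proof.
intros heps ha1 ha2.
set (b := 2 * alpha - 1).
assert (hb : 0 < b <= 1) by (unfold b; lra).
destruct (archimed_cor1 eps heps) as [K [HK K0]].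
assert (HKr : 1 <= INR K) by (apply (le_INR 1); lia).
assert (HepsK : 1 < eps * INR K).
{ apply (Rmult_lt_compat_r (INR K)) in HK; [|lra].
  rewrite Rinv_l in HK; lra. }
set (S0 := INR K * (16 / b + 9)).
assert (HS0 : 0 < S0).
{ unfold S0. apply Rmult_lt_0_compat; [lra|].
  assert (0 < 16 / b) by (apply Rdiv_lt_0_compat; lra). lra. }
destruct (archimed_cor1 (/ S0) (Rinv_0_lt_compat _ HS0)) as [N [HN N0]].
assert (HNS : S0 < INR N).
{ assert (0 < INR N) by (apply lt_0_INR; lia).
  apply (Rmult_lt_compat_r (S0 * INR N)) in HN; [|nra].
  replace (/ INR N * (S0 * INR N)) with S0 in HN by (field; lra).
  replace (/ S0 * (S0 * INR N)) with (INR N) in HN by (field; lra). lra. }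
exists (b / (64 * INR K * INR K)).
split.
{ apply Rdiv_lt_0_compat; nra. }
exists N.
intros n m hNn hm hmn.
have K0' : (0 < K)%N by apply/ltP.
set (x := INR n).
assert (Hx : S0 < x) by (apply: Rlt_le_trans HNS _; apply: INR_leq; exact hNn).
assert (HKpos : 0 < INR K) by lra.
destruct (Comb.nat_facts n K0') as [f1 f2 f3 f4].
set k := divn n K in f1 f2 f3 f4.
set h := divn k 4 in f3 f4.
set (kr := INR k). set (hr := INR h).
have g1 : kr * INR K <= x by rewrite /kr /x -INR_muln; apply: INR_leq.
have g2 : x < (kr + 1) * INR K.
{ rewrite /kr /x -S_INR -INR_muln; apply: INR_ltn; exact f2. }
set (y := x / INR K).
assert (Hxy : x = INR K * y) by (unfold y; field; lra).
assert (Hy1 : 16 / b + 9 <= y).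
{ unfold y. apply (Rmult_le_reg_r (INR K)); [lra|].
  replace (x / INR K * INR K) with x by (field; lra). unfold S0 in Hx. lra. }
assert (H16b : 0 < 16 / b) by (apply Rdiv_lt_0_compat; lra).
assert (Hyk : y - 1 <= kr).
{ assert (y < kr + 1); [|lra].
  unfold y. apply (Rmult_lt_reg_r (INR K)); [lra|].
  replace (x / INR K * INR K) with x by (field; lra). lra. }
have k6 : (6 <= k)%N.
{ apply: INR_leq'. rewrite -/kr. simpl. lra. }
have g3 : kr <= 4 * hr + 3.
{ have f3' : (k <= addn (muln 4 h) 3)%N by move: f3; lia.
  have H := INR_leq f3'. rewrite INR_addn INR_muln in H. unfold kr, hr. simpl in H. lra. }
have hx0 : 0 <= x by apply: pos_INR.
have np : (n <= m + m)%N.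
{ apply: INR_leq'; rewrite INR_addn; unfold x in *; nra. }
set (d := INR (subn (addn m m) n)).
have Hd : d = 2 * INR m - x by rewrite /d INR_subn // INR_addn -/x; lra.
have Hbd : b * x <= d.
{ rewrite Hd. unfold b. unfold x. lra. }
have RB : b / (64 * INR K * INR K) * x ^ 2 + 1 <= (hr + 1) * d - x.
{ apply (realB (INR K) y kr hr b x d); try assumption; lra. }
have hB : (n <= muln h.+1 (subn (addn m m) n))%N.
{ apply: INR_leq'. rewrite INR_muln S_INR -/hr -/d.
  assert (0 <= b / (64 * INR K * INR K) * x ^ 2).
  { apply Rmult_le_pos; [apply Rlt_le, Rdiv_lt_0_compat; nra | nra]. }
  unfold x in *. lra. }
have Hkeps : INR k <= eps * INR n.
{ have kr0 : 0 <= kr by apply: pos_INR.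
  unfold kr, x in *. nra. }
have Hc := Comb.comb2 np (@hlow_lemma m n k eps Hkeps) k6 hB.
set T := minn _ _ in Hc.
set (del := b / (64 * INR K * INR K)) in *.
have HT : del * x ^ 2 + 1 <= INR T.
{ rewrite /T /minn; case: ifP => _.
  - have e6 : (6 * k <= k * k)%N by rewrite leq_mul2r k6 orbT.
    have H4 := INR_leq f4.
    rewrite INR_addn INR_muln (INR_subn e6) !INR_muln -/kr in H4.
    have RA := realA (INR K) y kr b HKr ltac:(lra) Hyk hb.
    rewrite -Hxy in RA. simpl in H4. unfold del. rewrite -/k. lra.
  - rewrite -/k -/h (INR_subn hB) INR_muln S_INR -/hr -/d. unfold del, x in *. lra. }
unfold prob_low_rank.
have HcR := INR_leq Hc.
rewrite !INR_muln !INR_expn in HcR.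
have e2 : INR 2 = 2 by simpl; lra.
rewrite e2 in HcR.
have eE : muln (muln 2 m) n = muln (addn m m) n by lia.
rewrite eE.
set E := muln (addn m m) n in HcR *.
have p2E : 0 < 2 ^ E by apply: pow_lt; lra.
have p2T : 0 < 2 ^ T by apply: pow_lt; lra.
have Hbad : INR (bad_count m n eps) / 2 ^ E <= 2 / 2 ^ T.
{ apply (Rmult_le_reg_r (2 ^ E * 2 ^ T)); [nra|].
  replace (INR (bad_count m n eps) / 2 ^ E * (2 ^ E * 2 ^ T)) with (INR (bad_count m n eps) * 2 ^ T) by (field; lra).
  replace (2 / 2 ^ T * (2 ^ E * 2 ^ T)) with (2 * 2 ^ E) by (field; lra).
  exact HcR. }
apply: (Rle_trans _ _ _ Hbad).
have eR : 2 / 2 ^ T = Rpower 2 (1 - INR T).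
{ rewrite /Rminus Rpower_plus Rpower_Ropp Rpower_1; last lra.
  rewrite Rpower_pow; last lra. by []. }
rewrite eR. apply: Rle_Rpower; first lra.
unfold x in *. lra.
Qed.
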